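(* In the setting of the context (with $\mathcal S_t\subset\mathcal S_{t+1}$ for all $t$), for every $t$: (a) $\mathcal D_t=\{\{s,q\}\subset\{1,\dots,t\}: s\neq q,\ s\notin\mathcal S_q,\ q\notin\mathcal S_s\}$; (b) $\mathcal B_t=\{\{s,q\}\subset\mathcal S_t: s\neq q,\ s\notin\mathcal S_q,\ q\notin\mathcal S_s\}$.
   Context: Delayed feedback protocol over rounds $t=1,\dots,T$: at each round a point is played and its feedback (indexed by the timestamp $t$) is revealed later. $\mathcal S_t\subset\{1,\dots,t-1\}$ is the set of timestamps of feedback available to the active agent at time $t$, and it is assumed that $\mathcal S_t\subset\mathcal S_{t+1}$ for all $t$. Let $\mathcal U_t=\{1,\dots,t-1\}\setminus\mathcal S_t$. Arrival order: $\sigma$ is a permutation of $\{1,\dots,T\}$ such that $\mathcal S_t=\{\sigma(1),\dots,\sigma(|\mathcal S_t|)\}$ for all $t$; $\mathcal R_t=\{\sigma(1),\dots,\sigma(\sigma^{-1}(t)-1)\}$. Define the sets of unordered pairs of distinct elements $\mathcal D_t=\{\{s,q\}: s\in\{1,\dots,t\},\ q\in\mathcal U_s\}$ and $\mathcal B_t=\{\{s,q\}: s\in\mathcal S_t,\ q\in\mathcal R_s\setminus\mathcal S_s\}$. *)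

(* Defs.v *)
(* Timestamps 1..T are represented as elements of 'I_T.+1
   (the element 0 is unused). Unordered pairs {s,q} are 2-element sets
   [set s; q] : {set 'I_T.+1}. *)
From mathcomp Require Import all_boot all_fingroup.
Set Implicit Arguments. Unset Strict Implicit. Unset Printing Implicit Defensive.

Section Delayed.
Variable T : nat.
Local Notation tm := 'I_T.+1.

Definition upto (t : nat) : {set tm} := [set s : tm | 1 <= s <= t].

Definition Uset (S : tm -> {set tm}) (t : tm) : {set tm} :=
  [set q : tm | (1 <= q < t) && (q \notin S t)].

Definition Rset (sigma : {perm tm}) (t : tm) : {set tm} :=
  [set sigma i | i : tm & 1 <= i < (sigma^-1)%g t].

(* sigma is a permutation of {1..T}: a permutation of 'I_T.+1 fixing 0 *)
Definition perm_of_1T (sigma : {perm tm}) : Prop := sigma ord0 = ord0.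

Definition arrival_order (S : tm -> {set tm}) (sigma : {perm tm}) : Prop :=
  forall t : tm, 1 <= t ->
    S t = [set sigma i | i : tm & 1 <= i <= #|S t|].

Definition Dset (S : tm -> {set tm}) (t : tm) : {set {set tm}} :=
  [set [set s; q] | s in upto t, q in Uset S s].

Definition Bset (S : tm -> {set tm}) (sigma : {perm tm}) (t : tm)
  : {set {set tm}} :=
  [set [set s; q] | s in S t, q in Rset sigma s :\: S s].

Definition indep_pairs (S : tm -> {set tm}) (A : {set tm}) : {set {set tm}} :=
  [set [set s; q] | s in A,
     q in [set q in A | (q != s) && (s \notin S q) && (q \notin S s)]].

End Delayed.

(* Main.v *)
Require Import Defs.
From mathcomp Require Import all_boot all_fingroup.

Theorem proposition9 (T : nat) (S : 'I_T.+1 -> {set 'I_T.+1})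
  (sigma : {perm 'I_T.+1})
  (hS : forall t : 'I_T.+1, 1 <= t -> S t \subset [set q : 'I_T.+1 | 1 <= q < t])
  (hmono : forall t t' : 'I_T.+1, 1 <= t -> t'= t.+1 :> nat -> S t \subset S t')
  (hsigma : perm_of_1T sigma)
  (harr : arrival_order S sigma) :
  forall t : 'I_T.+1, 1 <= t ->
    Dset S t = indep_pairs S (upto T t) /\
    Bset S sigma t = indep_pairs S (S t).
Proof.
have hSlt : forall (u x : 'I_T.+1), 1 <= u -> x \in S u -> (1 <= x) && (x < u).
  by move=> u x u1 xS; move/subsetP: (hS u u1) => /(_ x xS); rewrite inE.
have inS : forall (u x : 'I_T.+1), 1 <= u ->
    (x \in S u) = (1 <= (sigma^-1)%g x <= #|S u|).
  move=> u x u1; rewrite {1}(harr u u1).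
  apply/imsetP/idP => [[i]|H].
    by rewrite inE => Hi ->; rewrite permK.
  by exists ((sigma^-1)%g x); rewrite ?inE ?permKV.
have inR : forall (s x : 'I_T.+1),
    (x \in Rset sigma s) = (1 <= (sigma^-1)%g x < (sigma^-1)%g s).
  move=> s x; rewrite /Rset.
  apply/imsetP/idP => [[i]|H].
    by rewrite inE => Hi ->; rewrite permK.
  by exists ((sigma^-1)%g x); rewrite ?inE ?permKV.
have idx0 : (sigma^-1)%g ord0 = ord0.
  by rewrite -{1}hsigma permK.
move=> t t1; split.
  apply/setP => P; rewrite /Dset /indep_pairs /upto /Uset.
  apply/imset2P/imset2P.
    case=> s q; rewrite inE => /andP[s1 st]; rewrite inE => /andP[/andP[q1 qs] qS] ->.
    apply: (Imset2spec (x1:=s) (x2:=q)) => //; first by rewrite inE s1 st.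
    rewrite !inE q1 qS /= andbT.
    apply/and3P; split; first by apply: leq_trans (ltnW qs) st.
      by rewrite -val_eqE /= (ltn_eqF qs).
    apply/negP => /(hSlt _ _ q1) /andP[_ sq].
    by move: (ltn_trans sq qs); rewrite ltnn.
  case=> s q; rewrite !inE => /andP[s1 st] /and3P[/andP[q1 qt] /andP[qs sSq] qSs] ->.
  case: (ltngtP q s) => [qs'|sq|e].
  - apply: (Imset2spec (x1:=s) (x2:=q)) => //; first by rewrite inE s1 st.
    by rewrite inE q1 qs' qSs.
  - apply: (Imset2spec (x1:=q) (x2:=s)); first by rewrite inE q1 qt.
    by rewrite inE s1 sq sSq. by rewrite setUC.
  - by move/val_inj: e => e; rewrite e eqxx in qs.
apply/setP => P; rewrite /Bset /indep_pairs.
apply/imset2P/imset2P.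
  case=> s q st; rewrite inE => /andP[qSs]; rewrite inR => /andP[iq1 iqs] ->.
  have st' := st; rewrite inS // in st'.
  have q1 : 1 <= q.
    case: q iq1 iqs qSs => [[|q] qlt] //=.
    by rewrite (_ : Ordinal qlt = ord0) ?idx0 //; apply: val_inj.
  apply: (Imset2spec (x1:=s) (x2:=q)) => //; rewrite !inE qSs andbT.
  apply/and3P; split.
  - rewrite inS // iq1 /=; case/andP: st' => _ h; exact: leq_trans (ltnW iqs) h.
  - by apply/eqP => e; rewrite e ltnn in iqs.
  - apply/negP; rewrite inS // => /andP[_ h].
    have : q \in S q by rewrite inS // iq1 /=; exact: leq_trans (ltnW iqs) h.
    by move/(hSlt _ _ q1)/andP => [_]; rewrite ltnn.
case=> s q st; rewrite !inE => /and3P[qt /andP[qs sSq] qSs] ->.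
have s1 : 1 <= s by case/andP: (hSlt _ _ t1 st).
have q1 : 1 <= q by case/andP: (hSlt _ _ t1 qt).
have st' := st; rewrite inS // in st'.
have qt' := qt; rewrite inS // in qt'.
case: (ltngtP ((sigma^-1)%g q) ((sigma^-1)%g s)) => [lt|lt|e].
- apply: (Imset2spec (x1:=s) (x2:=q)) => //; rewrite inE qSs inR lt andbT.
  by case/andP: qt'.
- apply: (Imset2spec (x1:=q) (x2:=s)) => //; last by rewrite setUC.
  by rewrite inE sSq inR lt andbT; case/andP: st'.
- by move/val_inj/perm_inj: e => e; rewrite e eqxx in qs.
Qed.
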